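(* Let $S,T,Q\ge1$ be integers. Consider a separable ARMA layer with moving-average kernel $W$ (for each pair $(t,s)$ a finitely supported real 2D filter $W_{t,s}$) and, for each output channel $t\in\{1,\dots,T\}$ and each $q\in\{1,\dots,Q\}$, length-3 real filters $f^{q}_{\cdot,t}=(f^{q}_{-1,t},f^{q}_{0,t},f^{q}_{1,t})$ and $g^{q}_{\cdot,t}=(g^{q}_{-1,t},g^{q}_{0,t},g^{q}_{1,t})$, whose input $X=(X_s)_{s=1}^S$ and output $Y=(Y_t)_{t=1}^T$ are related by $$\big(f^{1}_{\cdot,t}*\cdots*f^{Q}_{\cdot,t}\big)\otimes\big(g^{1}_{\cdot,t}*\cdots*g^{Q}_{\cdot,t}\big) * Y_t=\sum_{s=1}^{S}W_{t,s}*X_s\qquad(t=1,\dots,T).$$ If $$\big|f^{q}_{-1,t}+f^{q}_{1,t}\big|<f^{q}_{0,t}\quad\text{and}\quad \big|g^{q}_{-1,t}+g^{q}_{1,t}\big|<g^{q}_{0,t}\qquad\text{for all } q\in\{1,\dots,Q\},\ t\in\{1,\dots,T\},$$ then the layer is (BIBO) stable.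
   Context: Signals are real arrays indexed by $\mathbb{Z}^2$ (2D) or $\mathbb{Z}$ (1D); $*$ denotes convolution (1D filters convolved with each other give 1D filters), and for 1D filters $u,v$, $u\otimes v$ is the 2D filter $(u\otimes v)_{p_1,p_2}=u_{p_1}v_{p_2}$. A length-3 filter $f$ has entries $f_{-1},f_0,f_1$ at positions $-1,0,1$. A linear model $y=h*x$ is BIBO stable if for every input $x$ with $\sup_i|x_i|<\infty$ the output satisfies $\sup_i|y_i|<\infty$. The autoregressive relation $A_t*Y_t=Z_t$ (with $A_t$ the separable filter above and $Z_t=\sum_s W_{t,s}*X_s$) is realized as $Y_t=H_t*Z_t$ with $H_t$ a convolution inverse of $A_t$ ($H_t*A_t=\delta$); the layer is called stable if such inverses can be chosen so that the resulting map $X\mapsto Y$ sends bounded inputs to bounded outputs. *)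

(* Defs.v *)
From HB Require Import structures.
From mathcomp Require Import all_boot all_order all_algebra.
From mathcomp Require Import all_classical all_reals.
From mathcomp Require Import ereal esum.
Set Implicit Arguments. Unset Strict Implicit. Unset Printing Implicit Defensive.
Import Order.TTheory GRing.Theory Num.Theory.
Local Open Scope classical_set_scope.
Local Open Scope ring_scope.

Section Defs.
Variable R : realType.

Definition asummable (I : choiceType) (f : I -> R) : Prop :=
  summable [set: I] (fun k => (f k)%:E).

(* Sum of a real family (meaningful when the family is absolutely summable):
   sum of positive parts minus sum of negative parts. *)
Definition ssum (I : choiceType) (f : I -> R) : R :=
  fine (\esum_(k in [set: I]) (Num.max (f k) 0)%:E) -
  fine (\esum_(k in [set: I]) (Num.max (- f k) 0)%:E).

Definition conv1 (u v : int -> R) : int -> R :=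
  fun p => ssum (fun k : int => u k * v (p - k)).

Definition conv2 (h x : int * int -> R) : int * int -> R :=
  fun p => ssum (fun k : int * int => h k * x (p.1 - k.1, p.2 - k.2)).

Definition delta1 : int -> R := fun p => if p == 0 then 1 else 0.
Definition delta2 : int * int -> R :=
  fun p => if (p.1 == 0) && (p.2 == 0) then 1 else 0.

Definition iconv1 (us : seq (int -> R)) : int -> R := foldr conv1 delta1 us.

Definition tens (u v : int -> R) : int * int -> R := fun p => u p.1 * v p.2.

Definition bounded2 (x : int * int -> R) : Prop :=
  exists M : R, forall p, `|x p| <= M.

Definition length3 (u : int -> R) : Prop :=
  forall i : int, i \notin [:: -1; 0; 1] -> u i = 0.

Definition fin_supp2 (w : int * int -> R) : Prop :=
  finite_set [set p | w p != 0].

Definition ar_filter (Q Tn : nat) (f g : 'I_Q -> 'I_Tn -> int -> R) (t : 'I_Tn)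
  : int * int -> R :=
  tens (iconv1 [seq f q t | q <- enum 'I_Q]) (iconv1 [seq g q t | q <- enum 'I_Q]).

(* Stability of the layer A_t * Y_t = Z_t := sum_s W_{t,s} * X_s:
   convolution inverses H_t (H_t * A_t = delta) can be chosen so that
   Y_t := H_t * Z_t is well defined (absolutely convergent) and bounded
   for every bounded input X. *)
Definition arma_stable (Sn Tn : nat) (A : 'I_Tn -> int * int -> R)
  (W : 'I_Tn -> 'I_Sn -> int * int -> R) : Prop :=
  exists H : 'I_Tn -> int * int -> R,
    (forall t, conv2 (H t) (A t) = delta2) /\
    forall X : 'I_Sn -> int * int -> R,
      (forall s, bounded2 (X s)) ->
      forall t : 'I_Tn,
        let Z := fun p => \sum_(s < Sn) conv2 (W t s) (X s) p in
        (forall p : int * int,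
            asummable (fun k : int * int => H t k * Z (p.1 - k.1, p.2 - k.2)))
        /\ bounded2 (conv2 (H t) Z).

End Defs.

(* Main.v *)
Require Import Defs.
From HB Require Import structures.
From mathcomp Require Import all_boot all_order all_algebra.
From mathcomp Require Import all_classical all_reals.
From mathcomp Require Import ereal esum.
From mathcomp Require Import sequences normedtype numfun.
From mathcomp Require Import ring lra.
Import Order.TTheory GRing.Theory Num.Theory.
Set Implicit Arguments. Unset Strict Implicit. Unset Printing Implicit Defensive.
Local Open Scope ring_scope.


Section Tool.
Variable R : realType.

Definition E (I : choiceType) (f : I -> R) : \bar R := \esum_(k in [set: I]) (f k)%:E.

Lemma asummableE (I : choiceType) (f : I -> R) :
  asummable f = (E (fun k => `|f k|%R) < +oo)%E.
Proof. by []. Qed.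

Lemma E_ge0 (I : choiceType) (f : I -> R) : (forall k, 0 <= f k) -> (0 <= E f)%E.
Proof. by move=> h; apply: esum_ge0 => k _; rewrite lee_fin. Qed.

Lemma E_le (I : choiceType) (f g : I -> R) : (forall k, f k <= g k) -> (E f <= E g)%E.
Proof. by move=> h; apply: le_esum => k _; rewrite lee_fin. Qed.

Lemma E_fin (I : choiceType) (f : I -> R) : (forall k, 0 <= f k) ->
  (E f < +oo)%E -> E f \is a fin_num.
Proof.
move=> h0 h; rewrite fin_numElt h andbT.
by apply: (lt_le_trans (ltNyr 0)); apply: E_ge0.
Qed.

Lemma E_fin_le (I : choiceType) (f g : I -> R) : (forall k, 0 <= f k) ->
  (forall k, f k <= g k) -> (E g < +oo)%E -> E f \is a fin_num.
Proof. by move=> h0 h hg; apply: E_fin => //; apply: le_lt_trans hg; apply: E_le. Qed.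

Lemma EFinE (I : choiceType) (f : I -> R) : (forall k, 0 <= f k) ->
  (E f < +oo)%E -> E f = (fine (E f))%:E.
Proof. by move=> h0 h; rewrite fineK //; apply: E_fin. Qed.

Lemma ED (I : choiceType) (f g : I -> R) : (forall k, 0 <= f k) -> (forall k, 0 <= g k) ->
  E (fun k => f k + g k) = (E f + E g)%E.
Proof.
move=> h1 h2; rewrite /E -esumD //; last by move=> k _; rewrite lee_fin.
by move=> k _; rewrite lee_fin.
Qed.

Lemma EZ (I : choiceType) (c : R) (f : I -> R) : 0 <= c -> (forall k, 0 <= f k) ->
  E (fun k => c * f k) = (c%:E * E f)%E.
Proof.
move=> c0 f0.
have key : forall (d : R) (g : I -> R), 0 <= d -> (forall k, 0 <= g k) ->
    (E (fun k => (d * g k)%R) <= d%:E * E g)%E.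
  move=> d g d0 g0; rewrite /E /esum.
  apply: ge_ereal_sup => /= _ [X [finX _] <-].
  rewrite fsbig_finite //=.
  under eq_bigr do rewrite EFinM.
  rewrite -ge0_sume_distrr; last by move=> k _; rewrite lee_fin.
  apply: lee_wpmul2l; first by rewrite lee_fin.
  apply: ereal_sup_ubound; exists X => //.
  by rewrite fsbig_finite.
apply/eqP; rewrite eq_le key //=.
have [<-|cpos] := eqVneq 0 c; last have {cpos} cpos : 0 < c by rewrite lt_neqAle cpos c0.
  rewrite mul0e; apply: esum_ge0 => k _; rewrite lee_fin mul0r //.
have := key c^-1 (fun k => c * f k).
rewrite invr_ge0 (ltW cpos) => /(_ isT).
have h : forall k, 0 <= c * f k by move=> k; rewrite mulr_ge0 // ltW.
move=> /(_ h).
under eq_fun do rewrite mulrA mulVf ?mul1r ?gt_eqF //.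
move=> le1.
rewrite -(@lee_pmul2l _ c^-1%:E) //; last by rewrite lte_fin invr_gt0.
by rewrite muleA -EFinM mulVf ?gt_eqF // mul1e.
Qed.


Lemma maxEFin (x y : R) : Order.max x%:E y%:E = (Num.max x y)%:E.
Proof.
by case: (leP x y) => h; [rewrite !max_r // lee_fin | rewrite !max_l // lee_fin ltW].
Qed.

Lemma summable_of (I : choiceType) (a : I -> R) : (forall k, 0 <= a k) -> (E a < +oo)%E ->
  summable [set: I] (fun k => (a k)%:E).
Proof.
move=> h0 h; rewrite /summable; apply: le_lt_trans h; apply: le_esum => k _.
by rewrite /= ger0_norm.
Qed.

Lemma ssum_split (I : choiceType) (a b : I -> R) :
  (forall k, 0 <= a k) -> (forall k, 0 <= b k) -> (E a < +oo)%E -> (E b < +oo)%E ->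
  ssum (fun k => a k - b k) = fine (E a) - fine (E b).
Proof.
move=> a0 b0 sa sb.
have := esumB (summable_of a0 sa) (summable_of b0 sb) (fun k _ => a0 k) (fun k _ => b0 k).
have ep : (\esum_(i in [set: I]) ((fun x => (a x)%:E) \- (fun x => (b x)%:E))^\+ i)%E
    = E (fun k => Num.max (a k - b k) 0).
  by apply: eq_esum => k _; rewrite funeposE /= -EFinB maxEFin.
have en : (\esum_(i in [set: I]) ((fun x => (a x)%:E) \- (fun x => (b x)%:E))^\- i)%E
    = E (fun k => Num.max (- (a k - b k)) 0).
  apply: eq_esum => k _; by rewrite funenegE /= maxEFin.
rewrite ep en.
rewrite /ssum -/(E a) -/(E b) => h.
have fa := E_fin a0 sa; have fb := E_fin b0 sb.
have p0 : forall k, 0 <= Num.max (a k - b k) 0 by move=> k; rewrite le_max lexx orbT.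
have n0 : forall k, 0 <= Num.max (- (a k - b k)) 0 by move=> k; rewrite le_max lexx orbT.
have fp : E (fun k => Num.max (a k - b k) 0) \is a fin_num.
  apply: (E_fin_le p0 (g := fun k => a k)) => // k.
  by rewrite ge_max a0 andbT lerBlDr lerDl.
have fn : E (fun k => Num.max (- (a k - b k)) 0) \is a fin_num.
  apply: (E_fin_le n0 (g := fun k => b k)) => // k.
  by rewrite ge_max b0 andbT opprB lerBlDr lerDl.
by rewrite -fineB // -[RHS]fineB // h.
Qed.


Definition pp (I : Type) (f : I -> R) k := Num.max (f k) 0.
Definition nn (I : Type) (f : I -> R) k := Num.max (- f k) 0.

Lemma pp_ge0 (I : Type) (f : I -> R) k : 0 <= pp f k.
Proof. by rewrite /pp le_max lexx orbT. Qed.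
Lemma nn_ge0 (I : Type) (f : I -> R) k : 0 <= nn f k.
Proof. by rewrite /nn le_max lexx orbT. Qed.
Lemma ppnn (I : Type) (f : I -> R) k : f k = pp f k - nn f k.
Proof.
rewrite /pp /nn; case: (leP (f k) 0) => h.
  have e2 : Num.max (- f k) 0 = - f k by apply: max_l; rewrite oppr_ge0.
  by rewrite e2 sub0r opprK.
have e2 : Num.max (- f k) 0 = 0 by apply: max_r; rewrite oppr_le0 ltW.
by rewrite e2 subr0.
Qed.
Lemma ppnn_abs (I : Type) (f : I -> R) k : `|f k| = pp f k + nn f k.
Proof.
rewrite /pp /nn; case: (leP (f k) 0) => h.
  have e2 : Num.max (- f k) 0 = - f k by apply: max_l; rewrite oppr_ge0.
  by rewrite e2 add0r ler0_norm.
have e2 : Num.max (- f k) 0 = 0 by apply: max_r; rewrite oppr_le0 ltW.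
by rewrite e2 addr0 gtr0_norm.
Qed.
Lemma pp_le (I : Type) (f : I -> R) k : pp f k <= `|f k|.
Proof. by rewrite ppnn_abs lerDl nn_ge0. Qed.
Lemma nn_le (I : Type) (f : I -> R) k : nn f k <= `|f k|.
Proof. by rewrite ppnn_abs lerDr pp_ge0. Qed.

Lemma ssumE (I : choiceType) (f : I -> R) : ssum f = fine (E (pp f)) - fine (E (nn f)).
Proof. by []. Qed.

Lemma asum_pp (I : choiceType) (f : I -> R) : asummable f -> (E (pp f) < +oo)%E.
Proof. by rewrite asummableE; apply: le_lt_trans; apply: E_le => k; apply: pp_le. Qed.
Lemma asum_nn (I : choiceType) (f : I -> R) : asummable f -> (E (nn f) < +oo)%E.
Proof. by rewrite asummableE; apply: le_lt_trans; apply: E_le => k; apply: nn_le. Qed.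

Lemma ssum_gen (I : choiceType) (f a b : I -> R) :
  (forall k, 0 <= a k) -> (forall k, 0 <= b k) -> (E a < +oo)%E -> (E b < +oo)%E ->
  (forall k, f k = a k - b k) -> ssum f = fine (E a) - fine (E b).
Proof.
move=> a0 b0 sa sb e; have -> : f = (fun k => a k - b k) by apply: funext.
exact: ssum_split.
Qed.

Lemma asummable_le (I : choiceType) (f g : I -> R) :
  (forall k, `|f k| <= g k) -> (E g < +oo)%E -> asummable f.
Proof. by move=> h; rewrite asummableE; apply: le_lt_trans; apply: E_le. Qed.

Lemma asummableD (I : choiceType) (f g : I -> R) :
  asummable f -> asummable g -> asummable (fun k => f k + g k).
Proof.
rewrite !asummableE => hf hg; apply: (asummable_le (g := fun k => `|f k| + `|g k|)).
  by move=> k; apply: ler_normD.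
by rewrite ED // ; apply: lte_add_pinfty.
Qed.

Lemma asummableZ (I : choiceType) (c : R) (f : I -> R) :
  asummable f -> asummable (fun k => c * f k).
Proof.
rewrite !asummableE => hf; apply: (asummable_le (g := fun k => `|c| * `|f k|)).
  by move=> k; rewrite normrM.
by rewrite EZ //; apply: lte_mul_pinfty => //; rewrite lee_fin.
Qed.

Lemma ssumD (I : choiceType) (f g : I -> R) : asummable f -> asummable g ->
  ssum (fun k => f k + g k) = ssum f + ssum g.
Proof.
move=> hf hg.
rewrite (@ssum_gen _ _ (fun k => pp f k + pp g k) (fun k => nn f k + nn g k)).
- rewrite !ED; try (by move=> k; apply: pp_ge0); try (by move=> k; apply: nn_ge0).
  rewrite !fineD; try (by apply: E_fin => //; [move=> k; apply: pp_ge0|apply: asum_pp]);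
    try (by apply: E_fin => //; [move=> k; apply: nn_ge0|apply: asum_nn]).
  rewrite !ssumE; lra.
- by move=> k; rewrite addr_ge0 ?pp_ge0.
- by move=> k; rewrite addr_ge0 ?nn_ge0.
- rewrite ED; try (by move=> k; apply: pp_ge0).
  by apply: lte_add_pinfty; apply: asum_pp.
- rewrite ED; try (by move=> k; apply: nn_ge0).
  by apply: lte_add_pinfty; apply: asum_nn.
- by move=> k; rewrite [f k]ppnn [g k]ppnn; ring.
Qed.

Lemma ssumZ (I : choiceType) (c : R) (f : I -> R) : asummable f ->
  ssum (fun k => c * f k) = c * ssum f.
Proof.
move=> hf.
have hp := asum_pp hf; have hn := asum_nn hf.
have fp : E (pp f) \is a fin_num by apply: E_fin => // k; apply: pp_ge0.
have fn : E (nn f) \is a fin_num by apply: E_fin => // k; apply: nn_ge0.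
have [c0|c0] := leP 0 c.
  rewrite (@ssum_gen _ _ (fun k => c * pp f k) (fun k => c * nn f k)).
  - rewrite !EZ //; try (by move=> k; apply: pp_ge0); try (by move=> k; apply: nn_ge0).
    rewrite !fineM // ssumE /=; ring.
  - by move=> k; rewrite mulr_ge0 ?pp_ge0.
  - by move=> k; rewrite mulr_ge0 ?nn_ge0.
  - by rewrite EZ //; [apply: lte_mul_pinfty; rewrite ?lee_fin|move=> k; apply: pp_ge0].
  - by rewrite EZ //; [apply: lte_mul_pinfty; rewrite ?lee_fin|move=> k; apply: nn_ge0].
  - by move=> k; rewrite [f k]ppnn; ring.
have c0' : 0 <= - c by rewrite oppr_ge0 ltW.
rewrite (@ssum_gen _ _ (fun k => - c * nn f k) (fun k => - c * pp f k)).
- rewrite !EZ //; try (by move=> k; apply: pp_ge0); try (by move=> k; apply: nn_ge0).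
  rewrite !fineM // ssumE /=; ring.
- by move=> k; rewrite mulr_ge0 ?nn_ge0.
- by move=> k; rewrite mulr_ge0 ?pp_ge0.
- by rewrite EZ //; [apply: lte_mul_pinfty; rewrite ?lee_fin|move=> k; apply: nn_ge0].
- by rewrite EZ //; [apply: lte_mul_pinfty; rewrite ?lee_fin|move=> k; apply: pp_ge0].
- by move=> k; rewrite [f k]ppnn; ring.
Qed.

Lemma ssum_abs (I : choiceType) (f : I -> R) : asummable f ->
  `|ssum f| <= fine (E (fun k => `|f k|)).
Proof.
move=> hf.
have hp := asum_pp hf; have hn := asum_nn hf.
have fp : E (pp f) \is a fin_num by apply: E_fin => // k; apply: pp_ge0.
have fn : E (nn f) \is a fin_num by apply: E_fin => // k; apply: nn_ge0.
have -> : (fun k => `|f k|) = (fun k => pp f k + nn f k) by apply: funext => k; apply: ppnn_abs.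
rewrite ED; try (by move=> k; apply: pp_ge0); try (by move=> k; apply: nn_ge0).
rewrite fineD // ssumE.
have a0 : 0 <= fine (E (pp f)) by apply: fine_ge0; apply: E_ge0 => k; apply: pp_ge0.
have b0 : 0 <= fine (E (nn f)) by apply: fine_ge0; apply: E_ge0 => k; apply: nn_ge0.
rewrite ler_norml; apply/andP; split; lra.
Qed.

Lemma E_bij (I J : choiceType) (e : I -> J) (f : J -> R) : bijective e ->
  E (fun k => f (e k)) = E f.
Proof.
move=> be; rewrite /E (reindex_esum [set: I] [set: J] e) //.
by rewrite setTT_bijective.
Qed.

Lemma ssum_bij (I J : choiceType) (e : I -> J) (f : J -> R) : bijective e ->
  ssum (fun k => f (e k)) = ssum f.
Proof. by move=> be; rewrite !ssumE -(E_bij (pp f) be) -(E_bij (nn f) be). Qed.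

Lemma asummable_bij (I J : choiceType) (e : I -> J) (f : J -> R) : bijective e ->
  asummable f -> asummable (fun k => f (e k)).
Proof. by move=> be; rewrite !asummableE -(E_bij _ be). Qed.

Lemma E_pt (I : choiceType) (j : I) (x : R) : 0 <= x ->
  E (fun k => if k == j then x else 0) = x%:E.
Proof.
move=> x0; rewrite /E (esumID [set j]); last first.
  by move=> k _; case: ifP; rewrite lee_fin.
rewrite setTI esum_set1 ?eqxx ?lee_fin // esum1 ?adde0 // => k [_ /= /eqP nk].
by rewrite (negPf nk).
Qed.

Lemma asummable_pt (I : choiceType) (j : I) (x : R) :
  asummable (fun k => if k == j then x else 0).
Proof.
rewrite asummableE (_ : (fun k => _) = (fun k => if k == j then `|x| else 0)).
  by rewrite E_pt // ltry.
by apply: funext => k; case: ifP; rewrite ?normr0.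
Qed.

Lemma ssum_pt (I : choiceType) (j : I) (x : R) :
  ssum (fun k => if k == j then x else 0) = x.
Proof.
rewrite ssumE.
rewrite (_ : pp _ = (fun k => if k == j then Num.max x 0 else 0)); last first.
  by apply: funext => k; rewrite /pp; case: ifP; rewrite ?maxxx.
rewrite (_ : nn _ = (fun k => if k == j then Num.max (- x) 0 else 0)); last first.
  by apply: funext => k; rewrite /nn; case: ifP; rewrite ?oppr0 ?maxxx.
rewrite !E_pt ?le_max ?lexx ?orbT //=.
case: (leP x 0) => h.
  have e2 : Num.max (- x) 0 = - x by apply: max_l; rewrite oppr_ge0.
  by rewrite e2 sub0r opprK.
have e2 : Num.max (- x) 0 = 0 by apply: max_r; rewrite oppr_le0 ltW.
by rewrite e2 subr0.
Qed.


Lemma E_ge_pt (I : choiceType) (f : I -> R) i : (forall k, 0 <= f k) -> ((f i)%:E <= E f)%E.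
Proof.
move=> f0; rewrite /E (esumID [set i]); last by move=> k _; rewrite lee_fin.
rewrite setTI esum_set1 ?lee_fin // leeDl //; apply: esum_ge0 => k _; by rewrite lee_fin.
Qed.

Lemma E_fubini (I J : choiceType) (h : I * J -> R) : (forall k, 0 <= h k) ->
  E h = \esum_(i in [set: I]) E (fun j => h (i, j)).
Proof.
move=> h0; rewrite /E esum_esum; last by move=> i j _ _; rewrite lee_fin.
have -> : ([set: I] `*`` (fun=> [set: J]) = [set: I * J])%classic.
  by apply/seteqP; split => // -[].
by apply: eq_esum => -[].
Qed.

Lemma E_fin_pt (I : choiceType) (f : I -> R) i : (forall k, 0 <= f k) ->
  (E f < +oo)%E -> f i <= fine (E f).
Proof.
move=> f0 hf; rewrite -lee_fin fineK ?E_ge_pt //; exact: E_fin.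
Qed.


Lemma E_inner_le (I J : choiceType) (h : I * J -> R) i : (forall k, 0 <= h k) ->
  (E (fun j => h (i, j)) <= E h)%E.
Proof.
move=> h0; rewrite (E_fubini h0) /E (esumID [set i] [set: I]); last first.
  by move=> k _; apply: esum_ge0 => j _; rewrite lee_fin.
rewrite setTI esum_set1; last by apply: esum_ge0 => j _; rewrite lee_fin.
rewrite leeDl //; apply: esum_ge0 => k _; apply: esum_ge0 => j _; by rewrite lee_fin.
Qed.

Lemma E_fine_outer (I J : choiceType) (h : I * J -> R) : (forall k, 0 <= h k) ->
  (E h < +oo)%E -> E (fun i => fine (E (fun j => h (i, j)))) = E h.
Proof.
move=> h0 hh; rewrite (E_fubini h0) /E; apply: eq_esum => i _.
rewrite fineK //; apply: E_fin; first by move=> j.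
exact: le_lt_trans (E_inner_le i h0) hh.
Qed.

Lemma asummable_inner (I J : choiceType) (h : I * J -> R) i : asummable h ->
  asummable (fun j => h (i, j)).
Proof.
rewrite !asummableE; apply: le_lt_trans.
by apply: (E_inner_le i (h := fun k => `|h k|)) => k.
Qed.

Lemma ssum_fubini (I J : choiceType) (h : I * J -> R) : asummable h ->
  asummable (fun i => ssum (fun j => h (i, j))) /\
  ssum h = ssum (fun i => ssum (fun j => h (i, j))).
Proof.
move=> hh; split.
  apply: (asummable_le (g := fun i => fine (E (fun j => `|h (i, j)|)))).
    by move=> i; apply: ssum_abs; apply: asummable_inner.
  by rewrite (E_fine_outer (h := fun k => `|h k|)).
have hp := asum_pp hh; have hn := asum_nn hh.
rewrite (@ssum_gen _ (fun i => ssum (fun j => h (i, j)))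
   (fun i => fine (E (fun j => pp h (i, j)))) (fun i => fine (E (fun j => nn h (i, j))))).
- rewrite (E_fine_outer (h := pp h)) //; last by move=> k; apply: pp_ge0.
  rewrite (E_fine_outer (h := nn h)) //; last by move=> k; apply: nn_ge0.
- by move=> i; apply: fine_ge0; apply: E_ge0 => j; apply: pp_ge0.
- by move=> i; apply: fine_ge0; apply: E_ge0 => j; apply: nn_ge0.
- by rewrite (E_fine_outer (h := pp h)) // => k; apply: pp_ge0.
- by rewrite (E_fine_outer (h := nn h)) // => k; apply: nn_ge0.
- by move=> i; rewrite ssumE.
Qed.

Lemma ssum_swap (I J : choiceType) (h : I * J -> R) :
  ssum h = ssum (fun k : J * I => h (k.2, k.1)).
Proof.
rewrite (@ssum_bij _ _ (fun k : J * I => (k.2, k.1)) h) //.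
by exists (fun k : I * J => (k.2, k.1)) => -[].
Qed.

Lemma asummable_swap (I J : choiceType) (h : I * J -> R) : asummable h ->
  asummable (fun k : J * I => h (k.2, k.1)).
Proof.
apply: (@asummable_bij _ _ (fun k : J * I => (k.2, k.1)) h).
by exists (fun k : I * J => (k.2, k.1)) => -[].
Qed.

Lemma E_prod (I J : choiceType) (a : I -> R) (b : J -> R) :
  (forall k, 0 <= a k) -> (forall k, 0 <= b k) -> (E b < +oo)%E ->
  E (fun k : I * J => a k.1 * b k.2) = ((fine (E b))%:E * E a)%E.
Proof.
move=> a0 b0 hb.
rewrite E_fubini /=; last by move=> k; rewrite mulr_ge0.
rewrite -EZ //; last exact: fine_ge0 (E_ge0 b0).
rewrite /E; apply: eq_esum => i _.
rewrite -/(E (fun j => a i * b j)) EZ // (EFinE b0 hb) -EFinM mulrC //.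
Qed.

End Tool.



Section Conv.
Variable R : realType.
Implicit Types a b c u : int -> R.

Lemma asummable_ptf (I : choiceType) (j : I) (g : I -> R) :
  asummable (fun k => if k == j then g k else 0).
Proof.
rewrite (_ : (fun k => _) = (fun k => if k == j then g j else 0)).
  exact: asummable_pt.
by apply: funext => k; case: eqP => // ->.
Qed.

Lemma ssum_ptf (I : choiceType) (j : I) (g : I -> R) :
  ssum (fun k => if k == j then g k else 0) = g j.
Proof.
rewrite (_ : (fun k => _) = (fun k => if k == j then g j else 0)).
  exact: ssum_pt.
by apply: funext => k; case: eqP => // ->.
Qed.

Lemma l1_bounded a k : asummable a -> `|a k| <= fine (E (fun k => `|a k|)).
Proof. by move=> ha; apply: (E_fin_pt (f := fun k => `|a k|)). Qed.

Lemma conv_term_summable a c (M : R) p : asummable a -> (forall k, `|c k| <= M) ->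
  asummable (fun k => a k * c (p - k)).
Proof.
move=> ha hc; have M0 : 0 <= M by apply: le_trans (hc 0).
apply: (asummable_le (g := fun k => M * `|a k|)).
  by move=> k; rewrite normrM mulrC ler_wpM2r.
by rewrite EZ //; apply: lte_mul_pinfty => //; rewrite lee_fin.
Qed.

Lemma conv1_comm a b p : conv1 a b p = conv1 b a p.
Proof.
rewrite /conv1 -(@ssum_bij _ _ _ (fun k => p - k) (fun j => b j * a (p - j))).
  by congr ssum; apply: funext => k; rewrite subKr mulrC.
by exists (fun k => p - k) => k; rewrite subKr.
Qed.

Lemma E_conv_abs a b : asummable a -> asummable b ->
  (E (fun q : int * int => (`|a q.2| * `|b (q.1 - q.2)|)%R) < +oo)%E.
Proof.
move=> ha hb.
have e1 : E (fun q : int * int => `|a q.2| * `|b (q.1 - q.2)|) =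
    E (fun q : int * int => `|a q.1| * `|b (q.2 - q.1)|).
  apply: (@E_bij _ _ _ (fun q : int * int => (q.2, q.1))
    (fun q : int * int => `|a q.1| * `|b (q.2 - q.1)|)).
  by exists (fun q : int * int => (q.2, q.1)) => -[].
have e2 : E (fun q : int * int => `|a q.1| * `|b (q.2 - q.1)|) =
    E (fun q : int * int => `|a q.1| * `|b q.2|).
  apply: (@E_bij _ _ _ (fun q : int * int => (q.1, q.2 - q.1))
    (fun q : int * int => `|a q.1| * `|b q.2|)).
  by exists (fun q : int * int => (q.1, q.2 + q.1)) => -[x y] /=; rewrite ?addrK ?subrK.
rewrite e1 e2.
rewrite (E_prod (a := fun k => `|a k|) (b := fun k => `|b k|)) //; apply: lte_mul_pinfty => //; by rewrite lee_fin; apply: fine_ge0; apply: E_ge0.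
Qed.

Lemma conv1_l1 a b : asummable a -> asummable b -> asummable (conv1 a b).
Proof.
move=> ha hb.
apply: (asummable_le (g := fun p => fine (E (fun k => `|a k| * `|b (p - k)|)))).
  move=> p; rewrite /conv1.
  rewrite (_ : (fun k => `|a k| * `|b (p - k)|) = (fun k => `|a k * b (p - k)|)); last first.
    by apply: funext => k; rewrite normrM.
  apply: ssum_abs; apply: (conv_term_summable (M := fine (E (fun k => `|b k|)))) => // k.
  exact: l1_bounded.
have := E_fine_outer (h := fun q : int * int => `|a q.2| * `|b (q.1 - q.2)|).
move=> ->; [exact: E_conv_abs | by move=> k; rewrite mulr_ge0 | exact: E_conv_abs].
Qed.


Lemma bij_addk (k : int) : bijective (fun n : int => n + k).
Proof. by exists (fun n => n - k) => n; rewrite ?addrK ?subrK. Qed.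

Lemma conv1_assoc a b c (M : R) p : asummable a -> asummable b ->
  (forall k, `|c k| <= M) ->
  conv1 (conv1 a b) c p = conv1 a (conv1 b c) p.
Proof.
move=> ha hb hc; have M0 : 0 <= M by apply: le_trans (hc 0).
pose h := fun q : int * int => a q.2 * b (q.1 - q.2) * c (p - q.1).
have hh : asummable h.
  apply: (asummable_le (g := fun q : int * int => M * (`|a q.2| * `|b (q.1 - q.2)|))).
    by move=> q; rewrite /h !normrM [X in _ <= X]mulrC ler_wpM2l ?mulr_ge0 ?hc.
  rewrite (EZ (f := fun q : int * int => `|a q.2| * `|b (q.1 - q.2)|)) //.
    by apply: lte_mul_pinfty; rewrite ?lee_fin //; exact: E_conv_abs.
have hbM : forall k, `|b k| <= fine (E (fun k => `|b k|)) by move=> k; exact: l1_bounded.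
have s1 : (fun m => conv1 a b m * c (p - m)) = (fun m => ssum (fun k => h (m, k))).
  apply: funext => m; rewrite /conv1 mulrC -ssumZ; last first.
    by apply: conv_term_summable hbM.
  by congr ssum; apply: funext => k; rewrite /h /=; ring.
rewrite {1}/conv1 s1 -(ssum_fubini hh).2 ssum_swap.
rewrite (ssum_fubini (asummable_swap hh)).2 /conv1.
congr ssum; apply: funext => k /=.
rewrite /h /=.
have e1 : (fun m => a k * b (m - k) * c (p - m)) = (fun m => a k * (b (m - k) * c (p - m))).
  by apply: funext => m; rewrite mulrA.
have hs : asummable (fun m => b (m - k) * c (p - m)).
  have := @asummable_bij _ _ _ (fun m => m - k) (fun n => b n * c (p - k - n)).
  move=> /(_ _ (conv_term_summable (p - k) hb hc)).
  have -> : (fun m => b (m - k) * c (p - k - (m - k))) = (fun m => b (m - k) * c (p - m)).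
    by apply: funext => m; congr (_ * c _); ring.
  apply; by exists (fun n => n + k) => n; rewrite ?addrK ?subrK.
rewrite e1 ssumZ //; congr (_ * _).
rewrite -(@ssum_bij _ _ _ (fun n => n + k) (fun m => b (m - k) * c (p - m))).
  2: exact: bij_addk.
by congr ssum; apply: funext => n; rewrite addrK; congr (_ * c _); ring.
Qed.

Lemma conv1_delta a p : conv1 (@delta1 R) a p = a p.
Proof.
rewrite /conv1 (_ : (fun k => _) = (fun k => if k == 0 then a (p - k) else 0)).
  by rewrite ssum_ptf subr0.
by apply: funext => k; rewrite /delta1; case: ifP; rewrite ?mul1r ?mul0r.
Qed.

Lemma asummable_delta : asummable (@delta1 R).
Proof. exact: asummable_pt. Qed.

Lemma length3_split u k : length3 u ->
  u k = (if k == -1 then u (-1) else 0) + (if k == 0 then u 0 else 0) +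
        (if k == 1 then u 1 else 0).
Proof.
move=> h3.
have [->|n1] := eqVneq k (-1); first by rewrite (_ : (-1 == 0 :> int) = false) // (_ : (-1 == 1 :> int) = false) // !addr0.
have [->|n0] := eqVneq k 0; first by rewrite /= add0r addr0.
have [->|n2] := eqVneq k 1; first by rewrite /= !add0r.
by rewrite !addr0 h3 // !inE (negPf n1) (negPf n0) (negPf n2).
Qed.

Lemma length3_l1 u : length3 u -> asummable u.
Proof.
move=> h3; rewrite (_ : u = fun k => (if k == -1 then u (-1) else 0) + (if k == 0 then u 0 else 0) +
        (if k == 1 then u 1 else 0)); last by apply: funext => k; apply: length3_split.
by apply: asummableD; [apply: asummableD|]; apply: asummable_pt.
Qed.

Lemma conv1_length3 u v p : length3 u ->
  conv1 u v p = u (-1) * v (p + 1) + u 0 * v p + u 1 * v (p - 1).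
Proof.
move=> h3; rewrite /conv1.
rewrite (_ : (fun k => _) = fun k => (if k == -1 then u k * v (p - k) else 0) +
   (if k == 0 then u k * v (p - k) else 0) + (if k == 1 then u k * v (p - k) else 0)); last first.
  apply: funext => k; rewrite {1}(length3_split k h3) !mulrDl.
  by congr (_ + _ + _); case: eqP => [->|]; rewrite ?mul0r.
rewrite ssumD; [|apply: asummableD; apply: asummable_ptf|apply: asummable_ptf].
rewrite ssumD; [|apply: asummable_ptf|apply: asummable_ptf].
by rewrite !ssum_ptf opprK subr0.
Qed.

End Conv.



Section Geo.
Variable R : realType.

Lemma geo_partial (r : R) N : 0 <= r < 1 -> \sum_(0 <= k < N) r ^+ k <= (1 - r)^-1.
Proof.
case/andP => r0 r1.
have e : (1 - r) * \sum_(0 <= k < N) r ^+ k = 1 - r ^+ N.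
  elim: N => [|N IH]; first by rewrite big_geq // mulr0 expr0 subrr.
  by rewrite big_nat_recr //= mulrDr IH exprS; ring.
have p : 0 < 1 - r by rewrite subr_gt0.
rewrite -(ler_pM2l p) e mulfV ?gt_eqF // lerBlDr lerDl exprn_ge0 //.
Qed.

Lemma geo_nat (r : R) : 0 <= r < 1 ->
  (\esum_(n in [set: nat]) (r ^+ n)%:E < +oo)%E.
Proof.
move=> hr; case/andP: (hr) => r0 r1.
rewrite -nneseries_esumT; last by move=> n; rewrite lee_fin exprn_ge0.
apply: (@le_lt_trans _ _ ((1 - r)^-1)%:E); last exact: ltry.
apply: lime_le; first by apply: is_cvg_nneseries => n _ _; rewrite lee_fin exprn_ge0.
apply: nearW => N; rewrite sumEFin lee_fin; exact: geo_partial.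
Qed.

Lemma geo_l1 (r : R) : 0 <= r < 1 -> asummable (fun k : int => r ^+ `|k|%N).
Proof.
move=> hr; case/andP: (hr) => r0 r1.
rewrite asummableE.
rewrite (_ : (fun k : int => `|r ^+ `|k|%N|) = (fun k : int => r ^+ `|k|%N)); last first.
  by apply: funext => k; rewrite ger0_norm // exprn_ge0.
rewrite /E (esumID [set k : int | 0 <= k]); last by move=> k _; rewrite lee_fin exprn_ge0.
have e1 : ([set: int] `&` [set k : int | 0 <= k] = [set Posz n | n in [set: nat]])%classic.
  apply/seteqP; split => [k /= [_ k0]|k /= [n _ <-]] //.
  by exists `|k|%N => //; rewrite gez0_abs.
have e2 : ([set: int] `&` ~` [set k : int | 0 <= k] = [set Negz n | n in [set: nat]])%classic.
  apply/seteqP; split => [k /= [_ k0]|k /= [n _ <-]] //.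
    case: k k0 => n // _; by exists n.
rewrite e1 e2 !esum_image //; last by move=> x y _ _ [].
  2: by move=> x y _ _ [->].
apply: lte_add_pinfty; first exact: geo_nat.
apply: le_lt_trans (geo_nat hr); apply: le_esum => n _.
by rewrite lee_fin /= exprS ler_piMl // ?exprn_ge0 // ltW.
Qed.

End Geo.

Section Quad.
Variable R : realType.

Lemma abs_lt_K (fm f0 fp s : R) : `|fm + fp| < f0 -> 0 <= s ->
  s ^+ 2 = f0 ^+ 2 - 4 * fm * fp -> `|fp| < (f0 + s) / 2.
Proof.
move=> h s0 hs.
have f00 : 0 < f0 by apply: le_lt_trans h.
move: h; rewrite ltr_norml => /andP [h1 h2].
have [x0|x0] := leP 0 (2 * `|fp| - f0); last by lra.
suff : (2 * `|fp| - f0) ^+ 2 < s ^+ 2.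
  move=> hsq; have : 2 * `|fp| - f0 < s by nra.
  lra.
rewrite hs.
have [fp0|fp0] := leP 0 fp.
  rewrite ger0_norm //.
  have fpp : 0 < fp by move: x0; rewrite ger0_norm //; lra.
  nra.
rewrite ltr0_norm //; nra.
Qed.

Lemma quad_facts (fm f0 fp : R) : `|fm + fp| < f0 ->
  exists K al ga : R, [/\ 0 < K, `|al| < 1, `|ga| < 1 &
    [/\ fm = - (K * al), fp = - (K * ga) & f0 = K * (1 + al * ga)]].
Proof.
move=> h.
have f00 : 0 < f0 by apply: le_lt_trans h.
pose D := f0 ^+ 2 - 4 * fm * fp.
have D0 : 0 <= D.
  rewrite /D; move: h; rewrite ltr_norml => /andP [h1 h2].
  have p1 : 0 < (f0 - (fm + fp)) * (f0 + (fm + fp)) by apply: mulr_gt0; lra.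
  have p2 : 0 <= (fm - fp) ^+ 2 by apply: sqr_ge0.
  nra.
pose s := Num.sqrt D.
have s0 : 0 <= s by apply: sqrtr_ge0.
have hs : s ^+ 2 = D by apply: sqr_sqrtr.
pose K := (f0 + s) / 2.
have K0 : 0 < K by rewrite /K; lra.
have Kn : K != 0 by rewrite gt_eqF.
have hp : `|fp| < K by apply: (abs_lt_K h s0).
have hm : `|fm| < K.
  apply: (@abs_lt_K fp f0 fm s); first by rewrite addrC.
    by [].
  by rewrite hs /D; ring.
have KK : K ^+ 2 - f0 * K + fm * fp = 0.
  have e : 4 * (K ^+ 2 - f0 * K + fm * fp) = s ^+ 2 - D by rewrite /K /D; field.
  have : 4 * (K ^+ 2 - f0 * K + fm * fp) = 0 by rewrite e hs subrr.
  by move/eqP; rewrite mulf_eq0 (_ : (4 : R) == 0 = false) //= ?pnatr_eq0 // => /eqP.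
exists K, (- fm / K), (- fp / K); split => //.
- by rewrite normrM normrN normfV (gtr0_norm K0) ltr_pdivrMr // mul1r.
- by rewrite normrM normrN normfV (gtr0_norm K0) ltr_pdivrMr // mul1r.
split; [by field|by field|].
have -> : K * (1 + - fm / K * (- fp / K)) = (K ^+ 2 + fm * fp) / K by field.
have -> : K ^+ 2 + fm * fp = f0 * K by lra.
by rewrite mulfK.
Qed.

End Quad.

Section Inv3.
Variable R : realType.

Lemma inv3 (f : int -> R) : length3 f -> `|f (-1) + f 1| < f 0 ->
  exists u : int -> R, asummable u /\ forall p, conv1 f u p = delta1 R p.
Proof.
move=> h3 hf.
have [K [al [ga [K0 hal hga [em ep e0]]]]] := quad_facts hf.
have Kn : K != 0 by rewrite gt_eqF.
have hag : `|al * ga| < 1.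
  rewrite normrM; have := normr_ge0 al; have := normr_ge0 ga; nra.
have hag' : 1 - al * ga != 0.
  move: hag; rewrite ltr_norml => /andP [_ h]; rewrite subr_eq0 eq_sym lt_eqF //.
pose c := (K * (1 - al * ga))^-1.
pose u := fun k : int => if 0 <= k then c * ga ^+ `|k|%N else c * al ^+ `|k|%N.
have uP : forall n : nat, u n%:Z = c * ga ^+ n by move=> n.
have uN : forall n : nat, u (- n%:Z) = c * al ^+ n.
  case=> [|n]; first by rewrite /u /= !expr0.
  by rewrite /u oppr_ge0 lez_nat /=.
exists u; split.
  pose g0 := fun k : int => `|c| * (`|al| ^+ `|k|%N + `|ga| ^+ `|k|%N).
  have hg : asummable g0.
    apply: asummableZ; apply: asummableD; apply: geo_l1; apply/andP; split => //.
  apply: (asummable_le (g := fun k : int => Num.norm (g0 k))); last exact: hg.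
  move=> k; rewrite /g0 [X in _ <= X]ger0_norm; last by rewrite mulr_ge0 // addr_ge0 // exprn_ge0.
  rewrite /u; case: ifP => _; rewrite normrM normrX ler_wpM2l //.
    by rewrite lerDr exprn_ge0.
  by rewrite lerDl exprn_ge0.
move=> p; rewrite conv1_length3 // em ep e0.
case: p => n.
  case: n => [|m].
    rewrite add0r sub0r (uP 1%N) (uN 1%N) (uP 0%N) /delta1 /= !expr1 !expr0 /c.
    by field; rewrite Kn hag'.
  have -> : (m.+1)%:Z + 1 = (m.+2)%:Z by rewrite -PoszD addn1.
  have -> : (m.+1)%:Z - 1 = m%:Z by rewrite -addn1 PoszD addrK.
  rewrite !uP /delta1 /= !exprS; ring.
rewrite NegzE.
have -> : - (n.+1)%:Z + 1 = - n%:Z by rewrite -addn1 PoszD opprD addrNK.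
have -> : - (n.+1)%:Z - 1 = - (n.+2)%:Z by rewrite -opprD -PoszD addn1.
rewrite !uN /delta1 /= !exprS; ring.
Qed.

End Inv3.



Section Main.
Variable R : realType.

Lemma conv1_deltar (a : int -> R) p : conv1 a (@delta1 R) p = a p.
Proof. by rewrite conv1_comm conv1_delta. Qed.

Lemma inv_fold (T : Type) (s : seq T) (g v : T -> int -> R) :
  (forall q, [/\ asummable (g q), asummable (v q) & forall p, conv1 (v q) (g q) p = delta1 R p]) ->
  [/\ asummable (iconv1 [seq g q | q <- s]), asummable (iconv1 [seq v q | q <- s]) &
     forall p, conv1 (iconv1 [seq v q | q <- s]) (iconv1 [seq g q | q <- s]) p = delta1 R p].
Proof.
move=> hq; elim: s => [|q s [hG hV hVG]] /=.
  by split; [exact: asummable_delta | exact: asummable_delta | move=> p; apply: conv1_delta].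
have [hg hv hvg] := hq q.
rewrite /iconv1 /= -/(iconv1 _) -/(iconv1 _).
set G := iconv1 _ in hG hV hVG *; set V := iconv1 _ in hG hV hVG *.
split; [exact: conv1_l1 | exact: conv1_l1 |].
have bnd : forall (a : int -> R), asummable a -> forall k, `|a k| <= fine (E (fun k => `|a k|)).
  by move=> a ha k; apply: l1_bounded.
have e1 : conv1 V (conv1 (g q) G) = g q.
  apply: funext => m.
  rewrite conv1_comm (conv1_assoc _ hg hG (bnd _ hV)).
  have -> : conv1 G V = conv1 V G by apply: funext => k; apply: conv1_comm.
  have -> : conv1 V G = @delta1 R by apply: funext => k; apply: hVG.
  exact: conv1_deltar.
move=> p; rewrite (conv1_assoc _ hv hV (bnd _ (conv1_l1 hg hG))) e1.
exact: hvg.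
Qed.


Lemma asummable_prod (I J : choiceType) (a : I -> R) (b : J -> R) :
  asummable a -> asummable b -> asummable (fun k : I * J => a k.1 * b k.2).
Proof.
move=> ha hb; rewrite asummableE.
rewrite (_ : (fun k : I * J => _) = (fun k : I * J => `|a k.1| * `|b k.2|)); last first.
  by apply: funext => k; rewrite normrM.
rewrite (E_prod (a := fun k => `|a k|) (b := fun k => `|b k|)) //.
apply: lte_mul_pinfty => //; rewrite lee_fin; apply: fine_ge0; apply: E_ge0 => k //.
Qed.

Lemma ssum_prod (I J : choiceType) (a : I -> R) (b : J -> R) :
  asummable a -> asummable b -> ssum (fun k : I * J => a k.1 * b k.2) = ssum a * ssum b.
Proof.
move=> ha hb; rewrite (ssum_fubini (asummable_prod ha hb)).2 /=.
rewrite (_ : (fun i => ssum (fun j => a i * b j)) = (fun i => ssum b * a i)); last first.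
  by apply: funext => i; rewrite ssumZ // mulrC.
by rewrite ssumZ // mulrC.
Qed.

Lemma ssum_bound (I : choiceType) (a c : I -> R) (M : R) : 0 <= M ->
  asummable a -> (forall k, `|c k| <= M) ->
  asummable (fun k => a k * c k) /\ `|ssum (fun k => a k * c k)| <= M * fine (E (fun k => `|a k|)).
Proof.
move=> M0 ha hc.
have ha' := ha; rewrite asummableE in ha'.
have fa : E (fun k => `|a k|) \is a fin_num by apply: E_fin.
have le1 : forall k, `|a k * c k| <= M * `|a k|.
  by move=> k; rewrite normrM mulrC ler_wpM2r.
have hE : (E (fun k => (M * `|a k|)%R) < +oo)%E.
  by rewrite EZ //; apply: lte_mul_pinfty => //; rewrite lee_fin.
have hs : asummable (fun k => a k * c k) by apply: asummable_le hE.
split => //.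
apply: le_trans (ssum_abs hs) _.
rewrite (_ : M * fine _ = fine (M%:E * E (fun k => `|a k|%R))%E); last by rewrite fineM.
rewrite -EZ //.
apply: fine_le; [apply: E_fin_le le1 hE => k | apply: E_fin => // k | exact: E_le].
  by [].
  by rewrite mulr_ge0.
Qed.


Lemma fin_supp_l1 (I : choiceType) (w : I -> R) :
  finite_set [set p | w p != 0]%classic -> asummable w.
Proof.
move=> hw; rewrite asummableE /E (esumID [set p | w p != 0]%classic); last by move=> k _; rewrite lee_fin.
rewrite setTI esum_fset //.
rewrite fsumEFin // esum1 ?adde0 ?ltry // => k [_ /=] /negP.
by rewrite negbK => /eqP ->; rewrite normr0.
Qed.

End Main.

Unset Implicit Arguments.

Theorem theorem3 (R : realType) (Sn Tn Q : nat)
  (hS : (0 < Sn)%N) (hT : (0 < Tn)%N) (hQ : (0 < Q)%N)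
  (W : 'I_Tn -> 'I_Sn -> int * int -> R)
  (f g : 'I_Q -> 'I_Tn -> int -> R)
  (hW : forall t s, fin_supp2 (W t s))
  (hf3 : forall q t, length3 (f q t))
  (hg3 : forall q t, length3 (g q t))
  (hf : forall q t, `|f q t (-1) + f q t 1| < f q t 0)
  (hg : forall q t, `|g q t (-1) + g q t 1| < g q t 0) :
  arma_stable (ar_filter f g) W.
Proof.
have [uf huf] := choice (fun qt : 'I_Q * 'I_Tn => inv3 (hf3 qt.1 qt.2) (hf qt.1 qt.2)).
have [ug hug] := choice (fun qt : 'I_Q * 'I_Tn => inv3 (hg3 qt.1 qt.2) (hg qt.1 qt.2)).
pose U t := iconv1 [seq uf (q, t) | q <- enum 'I_Q].
pose V t := iconv1 [seq ug (q, t) | q <- enum 'I_Q].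
pose F t := iconv1 [seq f q t | q <- enum 'I_Q].
pose G t := iconv1 [seq g q t | q <- enum 'I_Q].
have hFU : forall t, [/\ asummable (F t), asummable (U t) & forall p, conv1 (U t) (F t) p = delta1 R p].
  move=> t; apply: (@inv_fold R _ _ (fun q => f q t) (fun q => uf (q, t))) => q.
  have [h1 h2] := huf (q, t).
  split => //; first exact: length3_l1.
  by move=> p; rewrite conv1_comm h2.
have hGV : forall t, [/\ asummable (G t), asummable (V t) & forall p, conv1 (V t) (G t) p = delta1 R p].
  move=> t; apply: (@inv_fold R _ _ (fun q => g q t) (fun q => ug (q, t))) => q.
  have [h1 h2] := hug (q, t).
  split => //; first exact: length3_l1.
  by move=> p; rewrite conv1_comm h2.
have bnd : forall (a : int -> R), asummable a -> forall k, `|a k| <= fine (E (fun k => `|a k|)).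
  by move=> a ha k; apply: l1_bounded.
exists (fun t => tens (U t) (V t)); split.
  move=> t; apply: funext => p.
  have [hF hU eFU] := hFU t; have [hG hV eGV] := hGV t.
  rewrite /conv2 /ar_filter /tens -/(F t) -/(G t).
  rewrite (_ : (fun k : int * int => _) = (fun k : int * int =>
     (U t k.1 * F t (p.1 - k.1)) * (V t k.2 * G t (p.2 - k.2)))); last first.
    by apply: funext => k; ring.
  rewrite (ssum_prod (a := fun i => U t i * F t (p.1 - i)) (b := fun j => V t j * G t (p.2 - j))).
  - rewrite -/(conv1 (U t) (F t) p.1) -/(conv1 (V t) (G t) p.2) eFU eGV.
    by rewrite /delta1 /delta2; case: (p.1 == 0); case: (p.2 == 0); rewrite ?mulr1 ?mulr0 ?mul0r.
  - exact: conv_term_summable hU (bnd _ hF).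
  - exact: conv_term_summable hV (bnd _ hG).
move=> X hX t Z.
have [MX hMX] := choice hX.
have MX0 : forall s, 0 <= MX s by move=> s; apply: le_trans (hMX s (0, 0)).
pose MZ := \sum_(s < Sn) MX s * fine (E (fun k => `|W t s k|)).
have MZ0 : 0 <= MZ.
  apply: sumr_ge0 => s _; apply: mulr_ge0 => //; apply: fine_ge0; apply: E_ge0 => k //.
have hZ : forall p, `|Z p| <= MZ.
  move=> p; rewrite /Z; apply: le_trans (ler_norm_sum _ _ _) _.
  apply: ler_sum => s _.
  exact: (ssum_bound (a := W t s) (c := fun k => X s (p.1 - k.1, p.2 - k.2)) (MX0 s)
     (fin_supp_l1 (hW t s)) (fun k => hMX s _)).2.
have [hF hU eFU] := hFU t; have [hG hV eGV] := hGV t.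
have hH : asummable (tens (U t) (V t)) by apply: asummable_prod.
split.
  move=> p.
  exact: (ssum_bound (a := tens (U t) (V t)) (c := fun k => Z (p.1 - k.1, p.2 - k.2)) MZ0 hH
     (fun k => hZ _)).1.
exists (MZ * fine (E (fun k => `|tens (U t) (V t) k|))) => p.
exact: (ssum_bound (a := tens (U t) (V t)) (c := fun k => Z (p.1 - k.1, p.2 - k.2)) MZ0 hH
     (fun k => hZ _)).2.
Qed.
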